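(* Let $\pi$ be a policy in a goal-conditioned MDP with discrete state space $\mathcal{S}$, fixed goal $s_g$ and discount factor $\gamma \in [0,1)$. For every state $s_0 \in \mathcal{S}$, $$V^\pi(s_0 \mid s_g) \;\geq\; \gamma^{\,d^\pi_T(s_0, s_g)}.$$
   Context: A goal-conditioned MDP has a discrete state space $\mathcal{S}$, discrete action space $\mathcal{A}$, goal-dependent transition kernel $P(\cdot \mid s, a, s_g)$, and discount factor $\gamma\in[0,1)$. The reward is $r(s_t,a_t,s_{t+1}\mid s_g)=\mathbb{I}[s_{t+1}=s_g]$, and on reaching the goal $s_g$ the process moves to an absorbing state with zero reward thereafter. A policy $\pi(\cdot\mid s, s_g)$ is a distribution over actions. For states $s, s_g$, let $T(s_g\mid \pi, s)$ be the random variable giving the first time-step at which $s_g$ is encountered when starting at $s$ and following $\pi$ (with actions $a\sim\pi(\cdot\mid s,s_g)$ and next states drawn from $P$). The time-step (quasi)metric is $d^\pi_T(s, s_g) := \mathbb{E}[T(s_g\mid\pi,s)]$. Under this reward the value of a state is $V^\pi(s\mid s_g) = \mathbb{E}\big[\gamma^{T(s_g\mid \pi, s)}\big]$. *)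

(* Defs.v *)
From HB Require Import structures.
From mathcomp Require Import all_boot all_order all_algebra.
From mathcomp Require Import all_classical all_reals.
From mathcomp Require Import ereal topology normedtype sequences esum exp.
Set Implicit Arguments. Unset Strict Implicit. Unset Printing Implicit Defensive.
Import Order.TTheory GRing.Theory Num.Theory.
Local Open Scope classical_set_scope.
Local Open Scope ring_scope.
Local Open Scope ereal_scope.

Section GCMDP.
Variable R : realType.

Definition is_distr (T : choiceType) (p : T -> R) : Prop :=
  (forall x, (0 <= p x)%R) /\ \esum_(x in [set: T]) (p x)%:E = 1.

Variables (S A : countType).
(* policy  pi s sg a = pi(a | s, sg);  kernel  P s a sg s' = P(s' | s, a, sg) *)
Variable pi : S -> S -> A -> R.
Variable P : S -> A -> S -> S -> R.
Variable sg : S.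

Definition step (s s' : S) : \bar R :=
  \esum_(a in [set: A]) (pi s sg a * P s a sg s')%:E.

(* sub_dist s0 t s = Pr(s_t = s and s_u <> sg for all u < t), start s0 *)
Fixpoint sub_dist (s0 : S) (t : nat) (s : S) : \bar R :=
  match t with
  | 0 => if s == s0 then 1 else 0
  | t'.+1 => \esum_(x in [set x : S | x != sg]) (sub_dist s0 t' x * step x s)
  end.

(* Pr(T(sg | pi, s0) = t): first time-step at which sg is encountered *)
Definition hit_prob (s0 : S) (t : nat) : \bar R := sub_dist s0 t sg.

Definition hit_finite (s0 : S) : \bar R := \sum_(t <oo) hit_prob s0 t.

(* d^pi_T(s0, sg) = E[T], equal to +oo when Pr(T = oo) > 0 *)
Definition dT (s0 : S) : \bar R :=
  if hit_finite s0 < 1 then +oo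
  else \sum_(t <oo) (t%:R)%:E * hit_prob s0 t.

(* V^pi(s0 | sg) = E[gamma^T]   (gamma^oo = 0) *)
Definition Vpi (gamma : R) (s0 : S) : \bar R :=
  \sum_(t <oo) (gamma ^+ t)%:E * hit_prob s0 t.

End GCMDP.

Definition epow (R : realType) (gamma : R) (x : \bar R) : \bar R :=
  match x with
  | EFin r => (gamma `^ r)%:E
  | +oo => 0
  | -oo => +oo
  end.

(* Main.v *)
Require Import Defs.
From HB Require Import structures.
From mathcomp Require Import all_boot all_order all_algebra.
From mathcomp Require Import all_classical all_reals.
From mathcomp Require Import ereal topology normedtype sequences esum exp.
From mathcomp Require Import lra.
Import Order.TTheory GRing.Theory Num.Theory.
Local Open Scope ring_scope.
Local Open Scope ereal_scope.

Lemma key_ineq (R : realType) (g r : R) : (0 <= g < 1)%R -> (0 <= r)%R ->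
  exists c : R, (0 <= c)%R /\
    forall t : nat, (g `^ r + c * r <= g ^+ t + c * t%:R)%R.
Proof.
move=> /andP[g0 g1] r0.
have [->|gn0] := eqVneq g 0%R.
  have [->|rn0] := eqVneq r 0%R.
    exists 1%R; split => // t; rewrite powRr0 mulr0 addr0 mul1r.
    case: t => [|t]; first by rewrite expr0 addr0.
    rewrite expr0n /= add0r; by rewrite ler1n.
  exists 0%R; split => // t.
  rewrite !mul0r !addr0.
  have -> : (0 `^ r = 0)%R by apply/eqP; rewrite powR_eq0 eqxx rn0.
  by rewrite exprn_ge0.
have gp : (0 < g)%R by rewrite lt_neqAle eq_sym gn0 g0.
set L := ln g.
have L0 : (L < 0)%R by apply: ln_lt0; rewrite gp g1.
exists (- (g `^ r * L))%R; split.
  rewrite oppr_ge0 pmulr_rle0 ?(ltW L0) //.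
  rewrite lt_neqAle powR_ge0 andbT eq_sym powR_eq0 negb_and gn0 //.
move=> t.
rewrite -(powR_mulrn t g0).
rewrite /powR (negbTE gn0) -/L.
set E := expR (r * L).
have : (E * (1 + (t%:R - r) * L) <= expR (t%:R * L))%R.
  have -> : (t%:R * L = r * L + (t%:R - r) * L)%R by rewrite mulrBl addrC subrK.
  rewrite expRD; apply: ler_wpM2l; first exact: expR_ge0.
  exact: expR_ge1Dx.
move=> H.
rewrite /E in H *; nra.
Qed.

Section Main.
Variables (R : realType) (S A : countType)
  (pi : S -> S -> A -> R) (P : S -> A -> S -> S -> R) (sg : S)
  (hpi : forall s g : S, is_distr (pi s g))
  (hP : forall (s : S) (a : A) (g : S), is_distr (P s a g)).

Lemma step_ge0 x s : 0 <= step pi P sg x s.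
Proof.
apply: esum_ge0 => a _; rewrite lee_fin mulr_ge0 //.
  exact: (hpi _ _).1.
exact: (hP _ _ _).1.
Qed.

Lemma sub_dist_ge0 s0 t s : 0 <= sub_dist pi P sg s0 t s.
Proof.
elim: t s => [|t IH] s /=; first by case: ifP.
apply: esum_ge0 => x _; apply: mule_ge0 => //; exact: step_ge0.
Qed.

Lemma hit_prob_ge0 s0 t : 0 <= hit_prob pi P sg s0 t.
Proof. exact: sub_dist_ge0. Qed.
End Main.

Theorem proposition1 (R : realType) (S A : countType)
  (pi : S -> S -> A -> R) (P : S -> A -> S -> S -> R) (gamma : R) (sg : S)
  (hgamma : (0 <= gamma < 1)%R)
  (hpi : forall s g : S, is_distr (pi s g))
  (hP : forall (s : S) (a : A) (g : S), is_distr (P s a g)) :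
  forall s0 : S, epow gamma (dT pi P sg s0) <= Vpi pi P sg gamma s0.
Proof.
move=> s0.
have p0 := @hit_prob_ge0 _ _ _ pi P sg hpi hP s0.
set p := hit_prob pi P sg s0 in p0 *.
have g0 : (0 <= gamma)%R by case/andP: hgamma.
have V0 : 0 <= Vpi pi P sg gamma s0.
  by apply: nneseries_ge0 => n _ _; apply: mule_ge0 => //; rewrite lee_fin exprn_ge0.
rewrite /dT; case: ifP => Hlt; first by [].
have H1 : 1 <= hit_finite pi P sg s0 by rewrite leNgt Hlt.
have D0 : 0 <= \sum_(t <oo) (t%:R)%:E * p t.
  by apply: nneseries_ge0 => n _ _; apply: mule_ge0.
move: D0; case ED: (\sum_(t <oo) (t%:R)%:E * p t) => [r| |] //= D0; last first.
rewrite lee_fin in D0.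
have [c [c0 Hc]] := @key_ineq _ gamma r hgamma D0.
rewrite /Vpi -/p.
have Hsum : \sum_(t <oo) ((gamma ^+ t)%:E * p t + c%:E * ((t%:R)%:E * p t))
    = \sum_(t <oo) (gamma ^+ t)%:E * p t + c%:E * r%:E.
  rewrite nneseriesD ?nneseriesZl ?ED //.
  all: move=> *; repeat apply: mule_ge0; rewrite ?lee_fin ?exprn_ge0 ?ler0n //.
have Hle : \sum_(t <oo) ((gamma `^ r + c * r)%R%:E * p t)
    <= \sum_(t <oo) ((gamma ^+ t)%:E * p t + c%:E * ((t%:R)%:E * p t)).
  apply: lee_nneseries.
    move=> i _ _; apply: mule_ge0 => //; rewrite lee_fin addr_ge0 ?powR_ge0 //.
    exact: mulr_ge0.
  move=> n _; rewrite muleA -EFinM -ge0_muleDl ?lee_fin ?exprn_ge0 //; last first.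
    exact: mulr_ge0.
  by apply: lee_wpmul2r => //; rewrite lee_fin Hc.
rewrite nneseriesZl // -/(hit_finite pi P sg s0) Hsum in Hle.
rewrite -EFinM in Hle; rewrite -(@leeD2rE _ (c * r)%:E) //.
apply: le_trans Hle.
rewrite -EFinD.
have hc : (0 <= gamma `^ r + c * r)%R by rewrite addr_ge0 ?powR_ge0 // mulr_ge0.
rewrite -[X in X <= _]mule1.
apply: lee_wpmul2l H1; by rewrite lee_fin. Qed.
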